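(* Let $n\in\mathbb{N}$ and $n-1<\beta<n$, and let $X=\mathsf{X}_\beta$ with alphabet $\mathcal{A}_\beta$. Define $\varphi\colon\mathcal{A}_\beta\to\{0,1\}^*$ by $\varphi(j)=1^j0$, extend it to words by concatenation, and let $X'$ be the shift space whose language consists of all subwords of words $\varphi(w)$, $w\in\mathcal{B}(X)$. Define $\varphi\colon X^+\to X'^+$ by $\varphi(x_1x_2\cdots)=\varphi(x_1)\varphi(x_2)\cdots$. Then $\varphi\colon X^+\to X'^+$ is surjective and order preserving with respect to the lexicographic order.
   Context: For $\beta>1$, let $e(\beta)=x_1x_2\cdots$ be the $\beta$-expansion of $1$ ($x_1=\lfloor\beta\rfloor$, $r_1=\{\beta\}$, $x_n=\lfloor\beta r_{n-1}\rfloor$, $r_n=\{\beta r_{n-1}\}$). The generating sequence is $g(\beta)=e(\beta)$ if $e(\beta)$ has infinitely many nonzero terms, and $g(\beta)=(a_1\cdots a_{k-1}(a_k-1))^\infty$ if $e(\beta)=a_1\cdots a_k00\cdots$ with $a_k\neq0$. The beta-shift $\mathsf{X}_\beta$ is the two-sided shift space whose language $\mathcal{B}(\mathsf{X}_\beta)$ is the set of words $x_n(t)\cdots x_m(t)$ occurring in $\beta$-expansions of $t\in[0,1]$; for non-integer $\beta$ its alphabet is $\mathcal{A}_\beta=\{0,\ldots,\lfloor\beta\rfloor\}$. A one-sided sequence $y_1y_2\cdots$ is a right-ray of $\mathsf{X}_\beta$ iff $y_ky_{k+1}\cdots\le g(\beta)$ lexicographically for all $k$. For a shift space $Y$, $Y^+=\{y_0y_1y_2\cdots\mid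 y\in Y\}$ is its set of right-rays, ordered lexicographically. *)

(* Defs.v *)
From Stdlib Require Import Reals ZArith List Arith.
Import ListNotations.
Open Scope R_scope.

(** Beta-expansion of t: r_0 = t, r_{k+1} = {beta * r_k};
    digit k = x_{k+1} = floor(beta * r_k).  In particular
    x_1 = floor(beta t), r_1 = {beta t}, x_n = floor(beta r_{n-1}). *)
Fixpoint beta_rem (beta t : R) (k : nat) : R :=
  match k with
  | O => t
  | S k' => frac_part (beta * beta_rem beta t k')
  end.

Definition beta_digit (beta t : R) (k : nat) : nat :=
  Z.to_nat (Int_part (beta * beta_rem beta t k)).

Definition lang_beta (beta : R) (w : list nat) : Prop :=
  exists t, 0 <= t <= 1 /\
  exists i, w = map (beta_digit beta t) (seq i (length w)).

Definition window (y : Z -> nat) (i : Z) (len : nat) : list nat :=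
  map (fun k => y (i + Z.of_nat k)%Z) (seq 0 len).

Definition in_shift (L : list nat -> Prop) (y : Z -> nat) : Prop :=
  forall i len, L (window y i len).

Definition right_ray (L : list nat -> Prop) (r : nat -> nat) : Prop :=
  exists y, in_shift L y /\ forall k, r k = y (Z.of_nat k).

Definition phi_letter (j : nat) : list nat := repeat 1%nat j ++ [0%nat].
Definition phi_word (w : list nat) : list nat := flat_map phi_letter w.

Definition lang_phi (L : list nat -> Prop) (u : list nat) : Prop :=
  exists w, L w /\ exists a b, phi_word w = a ++ u ++ b.

(** phi on one-sided sequences: phi(x_0) phi(x_1) ... ; the k-th symbol lies
    within the first k+1 blocks since every block is nonempty. *)
Definition phi_seq (x : nat -> nat) (k : nat) : nat :=
  nth k (phi_word (map x (seq 0 (S k)))) 0%nat.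

Definition lex_le (x y : nat -> nat) : Prop :=
  (forall k, x k = y k) \/
  exists k, (forall i, (i < k)%nat -> x i = y i) /\ (x k < y k)%nat.

(* Main.v *)
Require Import Defs.
From Stdlib Require Import Reals ZArith List Arith Lia Lra Classical.
Import ListNotations.
Open Scope R_scope.

Lemma phi_cons c w : phi_word (c :: w) = repeat 1%nat c ++ 0%nat :: phi_word w.
Proof. unfold phi_word; simpl. unfold phi_letter. rewrite <- app_assoc. reflexivity. Qed.

Lemma phi_app u v : phi_word (u ++ v) = phi_word u ++ phi_word v.
Proof. unfold phi_word. apply flat_map_app. Qed.

Lemma phi_len w : (length w <= length (phi_word w))%nat.
Proof. induction w. simpl; lia. rewrite phi_cons, length_app, repeat_length. simpl. lia. Qed.

Lemma rep_eq : forall c d l l', repeat 1%nat c ++ 0%nat :: l = repeat 1%nat d ++ 0%nat :: l' -> c = d /\ l = l'.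
Proof.
  induction c; destruct d; simpl; intros l l' H; try discriminate.
  - inversion H; auto.
  - inversion H. destruct (IHc d l l' H1). auto.
Qed.

Lemma rep_gt : forall c p b l, (c < p)%nat -> repeat 1%nat p ++ b = repeat 1%nat c ++ 0%nat :: l -> False.
Proof.
  induction c; destruct p; simpl; intros b l Hl H; try lia; inversion H.
  eapply IHc; [|eauto]. lia.
Qed.

Lemma app_rep_le : forall a c X Y, (length a <= c)%nat -> a ++ X = repeat 1%nat c ++ Y ->
  a = repeat 1%nat (length a) /\ X = repeat 1%nat (c - length a) ++ Y.
Proof.
  induction a; simpl; intros c X Y Hl H.
  - rewrite Nat.sub_0_r. auto.
  - destruct c; [lia|]. simpl in H. inversion H; subst.
    destruct (IHa c X Y) as [K1 K2]; auto; try lia. rewrite <- K1. auto.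
Qed.

Lemma app_rep_gt : forall c a X Y, (c < length a)%nat -> a ++ X = repeat 1%nat c ++ 0%nat :: Y ->
  exists a', a = repeat 1%nat c ++ 0%nat :: a' /\ a' ++ X = Y.
Proof.
  induction c; destruct a as [|e a]; simpl; intros X Y Hl H; try lia; inversion H; subst.
  - eauto.
  - destruct (IHc a X Y) as [a' [K1 K2]]; try lia; auto. subst. eauto.
Qed.

Lemma phi_prefix : forall v w b, phi_word w = phi_word v ++ b -> exists w', w = v ++ w'.
Proof.
  induction v as [|v0 v IH]; intros w b H.
  - exists w; reflexivity.
  - destruct w as [|c w].
    + rewrite phi_cons in H. apply (f_equal (@length nat)) in H.
      rewrite !length_app in H. simpl in H. lia.
    + rewrite !phi_cons, <- app_assoc in H. simpl in H. apply rep_eq in H as [-> H].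
      destruct (IH w b H) as [w' ->]. exists w'; reflexivity.
Qed.

Lemma no_run : forall w a b m, (forall c, In c w -> (c < m)%nat) ->
  phi_word w = a ++ repeat 1%nat m ++ b -> (0 < m)%nat -> False.
Proof.
  induction w as [|c w IH]; intros a b m Hc H Hm.
  - apply (f_equal (@length nat)) in H. rewrite !length_app, repeat_length in H. simpl in H. lia.
  - rewrite phi_cons in H. symmetry in H.
    destruct (Nat.le_gt_cases (length a) c) as [Hle|Hgt].
    + destruct (app_rep_le a c _ _ Hle H) as [Ha HX].
      rewrite Ha, app_assoc, <- repeat_app in H.
      eapply rep_gt; [|exact H]. pose proof (Hc c (or_introl eq_refl)). lia.
    + destruct (app_rep_gt c a _ _ Hgt H) as [a' [_ H2]].
      eapply IH; [| symmetry; exact H2 | exact Hm]. intros; apply Hc; simpl; auto.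
Qed.

Fixpoint prf (beta s : R) (v : list nat) : Prop :=
  match v with
  | [] => True
  | c :: v' => c = beta_digit beta s 0 /\ prf beta (beta_rem beta s 1) v'
  end.

Lemma rem_shift beta t i k : beta_rem beta t (i + k) = beta_rem beta (beta_rem beta t i) k.
Proof. induction k. rewrite Nat.add_0_r; reflexivity. rewrite Nat.add_succ_r. simpl. rewrite IHk. reflexivity. Qed.

Lemma digit_shift beta t i k : beta_digit beta t (i + k) = beta_digit beta (beta_rem beta t i) k.
Proof. unfold beta_digit. rewrite rem_shift. reflexivity. Qed.

Lemma rem_range beta t i : 0 <= t <= 1 -> 0 <= beta_rem beta t i <= 1.
Proof. intros H. destruct i; simpl. lra. destruct (base_fp (beta * beta_rem beta t i)). lra. Qed.

Lemma rem1_range beta t : 0 <= beta_rem beta t 1 < 1.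
Proof. simpl. destruct (base_fp (beta * t)). lra. Qed.

Lemma map_pre beta : forall v i t, v = map (beta_digit beta t) (seq i (length v)) -> prf beta (beta_rem beta t i) v.
Proof.
  induction v as [|c v IH]; intros i t H; cbn [prf]; auto.
  simpl in H. injection H as E1 E2. split.
  - rewrite E1. rewrite <- (Nat.add_0_r i) at 1. apply digit_shift.
  - rewrite <- rem_shift, Nat.add_1_r. apply IH. auto.
Qed.

Lemma lang_pre beta v : lang_beta beta v -> exists s, 0 <= s <= 1 /\ prf beta s v.
Proof.
  intros [t [Ht [i Hi]]]. exists (beta_rem beta t i). split. apply rem_range; auto. apply map_pre; auto.
Qed.

Lemma pre_map beta : forall v s, prf beta s v -> v = map (beta_digit beta s) (seq 0 (length v)).
Proof.
  induction v as [|c v IH]; intros s H; simpl; auto.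
  destruct H as [-> H]. f_equal.
  transitivity (map (beta_digit beta (beta_rem beta s 1)) (seq 0 (length v))). apply IH; auto.
  rewrite <- seq_shift, map_map. apply map_ext. intros k. rewrite <- (digit_shift beta s 1 k). reflexivity.
Qed.

Lemma pre_lang beta s v : 0 <= s <= 1 -> prf beta s v -> lang_beta beta v.
Proof. intros Hs H. exists s. split; auto. exists 0%nat. apply pre_map; auto. Qed.

Lemma pre_app beta : forall u v s, prf beta s (u ++ v) -> prf beta s u /\ prf beta (beta_rem beta s (length u)) v.
Proof.
  induction u as [|c u IH]; intros v s H; cbn [prf app length] in *; auto.
  destruct H as [H1 H2]. destruct (IH _ _ H2). split; auto.
  change (S (length u)) with (1 + length u)%nat. rewrite rem_shift. auto.
Qed.

Lemma int_frac (v : nat) (r : R) : 0 <= r < 1 ->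
  Int_part (INR v + r) = Z.of_nat v /\ frac_part (INR v + r) = r.
Proof.
  intros Hr.
  assert (Hu : (Z.of_nat v + 1)%Z = up (INR v + r)).
  { apply up_tech; rewrite ?plus_IZR, <- INR_IZR_INZ; lra. }
  assert (Hi : Int_part (INR v + r) = Z.of_nat v) by (unfold Int_part; lia).
  split; auto. unfold frac_part. rewrite Hi, <- INR_IZR_INZ. lra.
Qed.

Lemma digit_val beta s : 0 < beta -> 0 <= s ->
  INR (beta_digit beta s 0) + beta_rem beta s 1 = beta * s.
Proof.
  intros Hb Hs. unfold beta_digit. simpl.
  destruct (base_Int_part (beta * s)) as [H1 H2].
  assert (0 <= beta * s) by nra.
  assert (Hz : (0 <= Int_part (beta * s))%Z).
  { assert (-1 < IZR (Int_part (beta * s))) by lra. apply lt_IZR in H0. lia. }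
  rewrite INR_IZR_INZ, Z2Nat.id by auto. unfold frac_part. lra.
Qed.

Lemma digit_lt beta n s : 1 < beta -> beta < INR n -> 0 <= s <= 1 -> (beta_digit beta s 0 < n)%nat.
Proof.
  intros Hb Hn Hs. pose proof (digit_val beta s ltac:(lra) ltac:(lra)).
  pose proof (rem1_range beta s). apply INR_lt. nra.
Qed.

Lemma pre_lt beta n : 1 < beta -> beta < INR n -> forall v s, 0 <= s <= 1 -> prf beta s v ->
  forall c, In c v -> (c < n)%nat.
Proof.
  intros Hb Hn. induction v as [|d v IH]; intros s Hs H c Hc; cbn [prf In] in *. contradiction.
  destruct H as [-> H]. destruct Hc as [<- | Hc].
  - apply digit_lt; auto.
  - eapply IH; [|exact H|exact Hc]. pose proof (rem1_range beta s). lra.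
Qed.

Lemma zero_step beta s u : 1 < beta -> 0 <= s < 1 -> prf beta s u ->
  0 <= s / beta < 1 /\ prf beta (s / beta) (0%nat :: u).
Proof.
  intros Hb Hs H.
  assert (E : beta * (s / beta) = INR 0 + s) by (simpl; field; lra).
  destruct (int_frac 0 s Hs) as [I F].
  split.
  - split. unfold Rdiv; apply Rmult_le_pos; [lra| apply Rlt_le, Rinv_0_lt_compat; lra]. apply Rmult_lt_reg_l with beta; [lra|]. rewrite E. simpl. lra.
  - cbn [prf]. unfold beta_digit. simpl beta_rem. rewrite E, I, F. auto.
Qed.

Lemma zeros beta u : 1 < beta -> forall a s, 0 <= s < 1 -> prf beta s u ->
  exists s', 0 <= s' < 1 /\ prf beta s' (repeat 0%nat a ++ u).
Proof.
  intros Hb. induction a; intros s Hs H. simpl; eauto.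
  destruct (IHa s Hs H) as [s' [Hs' H']].
  destruct (zero_step beta s' _ Hb Hs' H'). exists (s' / beta). split; auto.
Qed.

Lemma dec_step beta s0 v0 v' : 1 < beta -> 0 <= s0 <= 1 -> (v0 < beta_digit beta s0 0)%nat ->
  prf beta (beta_rem beta s0 1) v' -> exists s, 0 <= s < 1 /\ prf beta s (v0 :: v').
Proof.
  intros Hb Hs Hv H.
  pose proof (rem1_range beta s0) as Hr.
  pose proof (digit_val beta s0 ltac:(lra) ltac:(lra)) as Hd.
  set (r1 := beta_rem beta s0 1) in *.
  assert (Hv2 : INR v0 + 1 <= INR (beta_digit beta s0 0)) by (rewrite <- S_INR; apply le_INR; lia).
  exists ((INR v0 + r1) / beta).
  assert (E : beta * ((INR v0 + r1) / beta) = INR v0 + r1) by (field; lra).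
  destruct (int_frac v0 r1 Hr) as [I F].
  pose proof (pos_INR v0).
  split.
  - split. unfold Rdiv; apply Rmult_le_pos; [lra| apply Rlt_le, Rinv_0_lt_compat; lra]. apply Rmult_lt_reg_l with beta; [lra|]. rewrite E. nra.
  - cbn [prf]. unfold beta_digit. simpl beta_rem. rewrite E, I, F, Nat2Z.id. auto.
Qed.

Lemma key beta : 1 < beta -> forall w s0, 0 <= s0 <= 1 -> prf beta s0 w ->
  forall a v b, phi_word w = a ++ phi_word v ++ b -> a <> [] ->
  exists s, 0 <= s < 1 /\ prf beta s v.
Proof.
  intros Hb. induction w as [|c w IH]; intros s0 Hs0 Hw a v b H Ha.
  - destruct a; [congruence|]. simpl in H. discriminate.
  - destruct v as [|v0 v']. { exists 0. split. lra. exact I. }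
    cbn [prf] in Hw. destruct Hw as [Hc Hw].
    pose proof (rem1_range beta s0) as Hr. assert (Hr0 : 0 <= beta_rem beta s0 1 <= 1) by lra.
    rewrite !phi_cons in H. symmetry in H.
    destruct (Nat.le_gt_cases (length a) c) as [Hle|Hgt].
    + destruct (app_rep_le a c _ _ Hle H) as [Ha1 HX].
      rewrite <- app_assoc in HX. simpl in HX. apply rep_eq in HX as [Hv0 HX].
      destruct (phi_prefix v' w b (eq_sym HX)) as [w'' ->].
      apply pre_app in Hw as [Hw _].
      apply (dec_step beta s0 v0 v' Hb Hs0); [|exact Hw]. rewrite <- Hc.
      destruct a; [congruence|]. simpl in Hv0, Hle. lia.
    + destruct (app_rep_gt c a _ _ Hgt H) as [a' [_ H2]].
      destruct a' as [|e a'].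
      * simpl in H2. rewrite <- phi_cons in H2.
        destruct (phi_prefix (v0 :: v') w b (eq_sym H2)) as [w'' ->].
        apply pre_app in Hw as [Hw _]. exists (beta_rem beta s0 1). auto.
      * eapply (IH (beta_rem beta s0 1) Hr0 Hw (e :: a') _ b); [|congruence]. rewrite <- H2, phi_cons. reflexivity.
Qed.

Lemma subword_nth (u l : list nat) K : (K + length u <= length l)%nat ->
  (forall j, (j < length u)%nat -> nth j u 0%nat = nth (K + j) l 0%nat) ->
  exists A B, l = A ++ u ++ B.
Proof.
  intros Hl Hn.
  assert (E : u = firstn (length u) (skipn K l)).
  { apply nth_ext with 0%nat 0%nat.
    - rewrite length_firstn, length_skipn. lia.
    - intros j Hj. rewrite nth_firstn. destruct (Nat.ltb_spec j (length u)); [|lia].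
      rewrite nth_skipn. auto. }
  exists (firstn K l), (skipn (length u) (skipn K l)).
  rewrite E at 1. rewrite !firstn_skipn. reflexivity.
Qed.

Lemma nth_map_seq (f : nat -> nat) s len j d : (j < len)%nat -> nth j (map f (seq s len)) d = f (s + j)%nat.
Proof.
  intros Hj. rewrite (nth_indep _ d (f 0%nat)) by (rewrite length_map, length_seq; auto).
  rewrite map_nth, seq_nth by auto. reflexivity.
Qed.

Lemma window_nth y i len j : (j < len)%nat -> nth j (window y i len) 0%nat = y (i + Z.of_nat j)%Z.
Proof. intros Hj. unfold window. rewrite nth_map_seq by auto. reflexivity. Qed.

Lemma length_window y i len : length (window y i len) = len.
Proof. unfold window. rewrite length_map, length_seq. auto. Qed.

Lemma zero_ext (L : list nat -> Prop) (f : nat -> nat) (G : nat -> list nat) :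
  (forall N, (N <= length (G N))%nat) ->
  (forall N k, (k < N)%nat -> nth k (G N) 0%nat = f k) ->
  (forall a N A u B, repeat 0%nat a ++ G N = A ++ u ++ B -> L u) ->
  right_ray L f.
Proof.
  intros H1 H2 H3.
  exists (fun p => if (p <? 0)%Z then 0%nat else f (Z.to_nat p)). split.
  - intros i len.
    remember (Z.to_nat (- i)) as a eqn:Ea. remember (Z.to_nat i) as K eqn:EK.
    destruct (subword_nth (window (fun p => if (p <? 0)%Z then 0%nat else f (Z.to_nat p)) i len)
                (repeat 0%nat a ++ G (K + len)%nat) K) as [A [B HAB]].
    + rewrite length_window, length_app, repeat_length. pose proof (H1 (K + len)%nat). lia.
    + intros j Hj. rewrite length_window in Hj. rewrite window_nth by auto.
      destruct (Z.ltb_spec (i + Z.of_nat j) 0).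
      * rewrite app_nth1 by (rewrite repeat_length; lia). rewrite nth_repeat. auto.
      * rewrite app_nth2 by (rewrite repeat_length; lia). rewrite repeat_length.
        rewrite H2 by lia. f_equal. lia.
    + eapply H3. exact HAB.
  - intros k. destruct (Z.ltb_spec (Z.of_nat k) 0); [lia|]. rewrite Nat2Z.id. auto.
Qed.

Lemma win_m1 (x : nat -> nat) (y : Z -> nat) N : (forall k, x k = y (Z.of_nat k)) ->
  window y (-1)%Z (S N) = y (-1)%Z :: map x (seq 0 N).
Proof.
  intros H. unfold window. cbn [seq map]. f_equal.
  rewrite <- seq_shift, map_map. apply map_ext. intros k. rewrite H. f_equal. lia.
Qed.

Lemma pw_prefix (x : nat -> nat) N1 N2 : (N1 <= N2)%nat ->
  phi_word (map x (seq 0 N2)) = phi_word (map x (seq 0 N1)) ++ phi_word (map x (seq N1 (N2 - N1))).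
Proof.
  intros H. replace N2 with (N1 + (N2 - N1))%nat at 1 by lia.
  rewrite seq_app, map_app, phi_app. reflexivity.
Qed.

Lemma phi_seq_nth x N m : (m < length (phi_word (map x (seq 0 N))))%nat ->
  phi_seq x m = nth m (phi_word (map x (seq 0 N))) 0%nat.
Proof.
  intros H. unfold phi_seq.
  destruct (Nat.le_ge_cases N (S m)) as [Hle|Hge].
  - rewrite (pw_prefix x N (S m) Hle), app_nth1 by auto. reflexivity.
  - rewrite (pw_prefix x (S m) N Hge), app_nth1. reflexivity.
    pose proof (phi_len (map x (seq 0 (S m)))). rewrite length_map, length_seq in H0. lia.
Qed.

Lemma phi_zeros a : phi_word (repeat 0%nat a) = repeat 0%nat a.
Proof. induction a. reflexivity. simpl repeat. rewrite phi_cons, IHa. reflexivity. Qed.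

Lemma phi_single c : phi_word [c] = repeat 1%nat c ++ [0%nat].
Proof. rewrite phi_cons. reflexivity. Qed.

Lemma part1 beta : 1 < beta -> forall x, right_ray (lang_beta beta) x ->
  right_ray (lang_phi (lang_beta beta)) (phi_seq x).
Proof.
  intros Hb x [y [Hy Hx]].
  assert (CA : forall N, exists s, 0 <= s < 1 /\ prf beta s (map x (seq 0 N))).
  { intros N. destruct (lang_pre _ _ (Hy (-1)%Z (S N))) as [s0 [Hs0 H]].
    rewrite (win_m1 x y N Hx) in H. cbn [prf] in H. destruct H as [_ H].
    exists (beta_rem beta s0 1). split; auto. apply rem1_range. }
  apply zero_ext with (G := fun N => phi_word (map x (seq 0 N))).
  - intros N. pose proof (phi_len (map x (seq 0 N))). rewrite length_map, length_seq in H. auto.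
  - intros N k Hk. symmetry. apply phi_seq_nth.
    pose proof (phi_len (map x (seq 0 N))). rewrite length_map, length_seq in H. lia.
  - intros a N A u B H. exists (repeat 0%nat a ++ map x (seq 0 N)). split.
    + destruct (CA N) as [s [Hs Hp]]. destruct (zeros beta _ Hb a s Hs Hp) as [s' [Hs' Hp']].
      eapply pre_lang; [|exact Hp']. lra.
    + exists A, B. rewrite phi_app, phi_zeros. exact H.
Qed.

Lemma part3 x y : lex_le x y -> lex_le (phi_seq x) (phi_seq y).
Proof.
  intros [Heq | [k [Hlt Hk]]].
  - left. intros m. unfold phi_seq. f_equal. f_equal. apply map_ext. auto.
  - right.
    set (P := phi_word (map x (seq 0 k))).
    assert (EP : phi_word (map y (seq 0 k)) = P).
    { unfold P. f_equal. apply map_ext_in. intros i Hi. apply in_seq in Hi. symmetry. apply Hlt. lia. }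
    assert (Ex : phi_word (map x (seq 0 (S k))) = P ++ repeat 1%nat (x k) ++ [0%nat]).
    { rewrite seq_S, map_app, phi_app. simpl map. rewrite phi_single. reflexivity. }
    assert (Ey : phi_word (map y (seq 0 (S k))) = P ++ repeat 1%nat (y k) ++ [0%nat]).
    { rewrite seq_S, map_app, phi_app. simpl map. rewrite phi_single, EP. reflexivity. }
    assert (Lx : length (phi_word (map x (seq 0 (S k)))) = (length P + x k + 1)%nat).
    { rewrite Ex, !length_app, repeat_length. simpl. lia. }
    assert (Ly : length (phi_word (map y (seq 0 (S k)))) = (length P + y k + 1)%nat).
    { rewrite Ey, !length_app, repeat_length. simpl. lia. }
    exists (length P + x k)%nat. split.
    + intros i Hi.
      rewrite (phi_seq_nth x (S k) i), (phi_seq_nth y (S k) i), Ex, Ey by lia.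
      destruct (Nat.lt_ge_cases i (length P)).
      * rewrite !app_nth1 by auto. reflexivity.
      * rewrite (app_nth2 P (repeat 1%nat (x k) ++ [0%nat]) 0%nat H), (app_nth2 P (repeat 1%nat (y k) ++ [0%nat]) 0%nat H).
        rewrite (app_nth1 (repeat 1%nat (x k))), (app_nth1 (repeat 1%nat (y k))) by (rewrite repeat_length; lia).
        rewrite !nth_repeat_lt by lia. reflexivity.
    + rewrite (phi_seq_nth x (S k)), (phi_seq_nth y (S k)), Ex, Ey by lia.
      assert (H : (length P <= length P + x k)%nat) by lia.
      rewrite (app_nth2 P (repeat 1%nat (x k) ++ [0%nat]) 0%nat H), (app_nth2 P (repeat 1%nat (y k) ++ [0%nat]) 0%nat H).
      replace (length P + x k - length P)%nat with (x k) by lia.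
      rewrite (app_nth1 (repeat 1%nat (y k))) by (rewrite repeat_length; lia).
      rewrite (app_nth2 (repeat 1%nat (x k))) by (rewrite repeat_length; lia).
      rewrite repeat_length, Nat.sub_diag, nth_repeat_lt by lia. simpl. lia.
Qed.

Fixpoint nz (y : nat -> nat) (p fuel : nat) : nat :=
  match fuel with
  | O => p
  | S f => if Nat.eqb (y p) 0 then p else nz y (S p) f
  end.

Lemma nz_spec y : forall fuel p, (exists q, p <= q < p + fuel /\ y q = 0)%nat ->
  (p <= nz y p fuel /\ y (nz y p fuel) = 0 /\ forall k, p <= k < nz y p fuel -> y k <> 0)%nat.
Proof.
  induction fuel; intros p [q [Hq Hy]]; simpl. lia.
  destruct (Nat.eqb_spec (y p) 0).
  - split; [lia|]. split; auto. intros; lia.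
  - destruct (IHfuel (S p)) as [H1 [H2 H3]].
    { exists q. split; auto. assert (q <> p) by (intro; subst; auto). lia. }
    split; [lia|]. split; auto. intros k Hk.
    destruct (Nat.eq_dec k p). subst; auto. apply H3. lia.
Qed.

Fixpoint st (y : nat -> nat) (n j : nat) : nat :=
  match j with
  | O => O
  | S j => S (nz y (st y n j) n)
  end.

Lemma block y : forall q p, (forall k, p <= k < p + q -> y k = 1)%nat -> y (p + q)%nat = 0%nat ->
  map y (seq p (S q)) = repeat 1%nat q ++ [0%nat].
Proof.
  induction q; intros p H1 H2.
  - simpl. rewrite Nat.add_0_r in H2. rewrite H2. reflexivity.
  - cbn [seq map]. cbn [seq map] in IHq.
    rewrite (H1 p) by lia. simpl repeat. rewrite <- app_comm_cons. f_equal.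
    specialize (IHq (S p)). cbn [seq map] in IHq. apply IHq.
    + intros k Hk. apply H1. lia.
    + rewrite <- H2. f_equal. lia.
Qed.

Lemma phi_01 : forall w e, In e (phi_word w) -> e = 0%nat \/ e = 1%nat.
Proof.
  induction w as [|c w IH]; intros e H. simpl in H. contradiction.
  rewrite phi_cons in H. apply in_app_iff in H as [H|[H|H]].
  - apply repeat_spec in H. auto.
  - auto.
  - apply IH; auto.
Qed.

Lemma lang_factor beta A u B : lang_beta beta (A ++ u ++ B) -> lang_beta beta u.
Proof.
  intros H. destruct (lang_pre _ _ H) as [s [Hs Hp]].
  apply pre_app in Hp as [_ Hp]. apply pre_app in Hp as [Hp _].
  eapply pre_lang; [|exact Hp]. apply rem_range. auto.
Qed.

Lemma part2 beta n : 1 < beta -> beta < INR n -> forall y, right_ray (lang_phi (lang_beta beta)) y ->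
  exists x, right_ray (lang_beta beta) x /\ forall k, phi_seq x k = y k.
Proof.
  intros Hb Hn y [z [Hz Hy]].
  assert (F0 : forall w, lang_beta beta w -> forall c, In c w -> (c < n)%nat).
  { intros w Hw. destruct (lang_pre _ _ Hw) as [s [Hs Hp]]. eapply pre_lt; eauto. }
  assert (F1 : forall k, y k = 0%nat \/ y k = 1%nat).
  { intros k. rewrite Hy. destruct (Hz (Z.of_nat k) 1%nat) as [w [Hw [A [B E]]]].
    apply (phi_01 w). rewrite E. apply in_or_app. right. apply in_or_app. left.
    unfold window. simpl. left. f_equal. lia. }
  assert (Hn2 : (1 < n)%nat) by (apply INR_lt; simpl; lra).
  assert (F2 : forall p, exists q, (p <= q < p + n)%nat /\ y q = 0%nat).
  { intros p. apply NNPP. intros Hno.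
    assert (E : window z (Z.of_nat p) n = repeat 1%nat n).
    { apply nth_ext with 0%nat 0%nat. rewrite length_window, repeat_length. auto.
      intros j Hj. rewrite length_window in Hj. rewrite window_nth, nth_repeat_lt by auto.
      rewrite <- Nat2Z.inj_add, <- Hy. destruct (F1 (p + j)%nat) as [H0|H0]; auto.
      exfalso. apply Hno. exists (p + j)%nat. split; auto. lia. }
    destruct (Hz (Z.of_nat p) n) as [w [Hw [A [B HE]]]]. rewrite E in HE.
    eapply no_run; [apply F0; exact Hw | exact HE | lia]. }
  set (x := fun j => (nz y (st y n j) n - st y n j)%nat).
  assert (NZ : forall j, (st y n j <= nz y (st y n j) n /\ y (nz y (st y n j) n) = 0 /\
                  forall k, st y n j <= k < nz y (st y n j) n -> y k = 1)%nat).
  { intros j. destruct (nz_spec y n (st y n j) (F2 _)) as [H1 [H2 H3]].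
    split; auto. split; auto. intros k Hk. destruct (F1 k); auto. exfalso; eapply H3; eauto. }
  assert (PF : forall m, phi_word (map x (seq 0 m)) = map y (seq 0 (st y n m)) /\ (m <= st y n m)%nat).
  { induction m. simpl. auto.
    destruct IHm as [IH1 IH2]. destruct (NZ m) as [H1 [H2 H3]].
    assert (Est : st y n (S m) = (st y n m + S (x m))%nat) by (simpl; unfold x; lia).
    split; [|lia].
    rewrite seq_S, map_app, phi_app, IH1. simpl map at 2. rewrite phi_single.
    rewrite Est, seq_app, map_app. simpl (0 + _)%nat. f_equal.
    symmetry. apply block.
    - intros k Hk. apply H3. unfold x in Hk. lia.
    - unfold x. replace (st y n m + (nz y (st y n m) n - st y n m))%nat with (nz y (st y n m) n) by lia. auto. }
  exists x. split.
  - apply zero_ext with (G := fun N => map x (seq 0 N)).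
    + intros N. rewrite length_map, length_seq. auto.
    + intros N k Hk. rewrite nth_map_seq by auto. reflexivity.
    + intros a N A u B H. apply (lang_factor beta A u B). rewrite <- H.
      assert (CB : exists s, 0 <= s < 1 /\ prf beta s (map x (seq 0 N))).
      { destruct (Hz (-1)%Z (S (st y n N))) as [w [Hw [A' [B' HE]]]].
        rewrite (win_m1 y z _ Hy) in HE. destruct (PF N) as [P1 _]. rewrite <- P1 in HE.
        destruct (lang_pre _ _ Hw) as [s0 [Hs0 Hp]].
        apply (key beta Hb w s0 Hs0 Hp (A' ++ [z (-1)%Z]) (map x (seq 0 N)) B').
        - rewrite HE, <- app_assoc. reflexivity.
        - destruct A'; discriminate. }
      destruct CB as [s [Hs Hp]]. destruct (zeros beta _ Hb a s Hs Hp) as [s' [Hs' Hp']].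
      eapply pre_lang; [|exact Hp']. lra.
  - intros k. destruct (PF (S k)) as [P1 P2].
    rewrite (phi_seq_nth x (S k) k), P1 by (rewrite P1, length_map, length_seq; lia).
    rewrite nth_map_seq by lia. reflexivity.
Qed.

Theorem lemma4p4 (n : nat) (beta : R) :
  1 < beta -> INR n - 1 < beta < INR n ->
  (* phi maps X^+ into X'^+ *)
  (forall x, right_ray (lang_beta beta) x ->
     right_ray (lang_phi (lang_beta beta)) (phi_seq x)) /\
  (* surjective *)
  (forall y, right_ray (lang_phi (lang_beta beta)) y ->
     exists x, right_ray (lang_beta beta) x /\ forall k, phi_seq x k = y k) /\
  (* order preserving *)
  (forall x y, right_ray (lang_beta beta) x -> right_ray (lang_beta beta) y ->
     lex_le x y -> lex_le (phi_seq x) (phi_seq y)).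
Proof.
  intros Hb [Hn1 Hn2]. split; [|split].
  - apply part1; auto.
  - intros y Hy. eapply part2; eauto.
  - intros x y _ _ H. apply part3; auto.
Qed.
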